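(* Let $a,b\ge1$ and $P=[a]\times[b]$. For $1\le i\le a$, with $B=\{i\}\times[b]$, we have $\sum_{p\in B}T_p^-\equiv^q q^{a-i}\frac{[b]_q}{[a+b]_q}$. For $1\le j\le b$, with $B=[a]\times\{j\}$, we have $\sum_{p\in B}T_p^-\equiv^q q^{b-j}\frac{[a]_q}{[a+b]_q}$.
   Context: $[a]\times[b]=\{(i,j)\colon1\le i\le a,1\le j\le b\}$ with $(i,j)\le(i',j')$ iff $i\le i'$ and $j\le j'$. $\mathcal{J}(P)$ is the set of order ideals. For $p\in P$, $I\in\mathcal{J}(P)$: $T_p^+(I)=1$ if $p$ is minimal in $P\setminus I$, else $0$; $T_p^-(I)=1$ if $p$ is maximal in $I$, else $0$; $T_p^q=T_p^+-qT_p^-$ with $q$ an indeterminate. For $f,g\colon\mathcal{J}(P)\to\mathbb{R}(q)$, $f\equiv^q g$ means $f-g=\sum_{p\in P}c_p(q)T_p^q$ for some $c_p(q)\in\mathbb{R}(q)$; an element of $\mathbb{R}(q)$ denotes a constant function. $[m]_q=1+q+\dots+q^{m-1}$. *)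

(* Defs.v *)
From HB Require Import structures.
From mathcomp Require Import all_boot all_order all_algebra.
From mathcomp Require Import fraction.
From mathcomp Require Import reals.
Set Implicit Arguments. Unset Strict Implicit. Unset Printing Implicit Defensive.
Import Order.TTheory GRing.Theory Num.Theory.
Local Open Scope ring_scope.

(* The poset [a] x [b], encoded 0-based: the element (i,j) of the paper
   (1 <= i <= a, 1 <= j <= b) is the pair (i-1, j-1) : 'I_a * 'I_b. *)
Definition grid (a b : nat) : finType := ('I_a * 'I_b)%type.

Definition gle a b (x y : grid a b) : bool :=
  ((x.1 <= y.1)%N && (x.2 <= y.2)%N).

Definition glt a b (x y : grid a b) : bool := (x != y) && gle x y.

Definition is_ideal a b (I : {set grid a b}) : bool :=
  [forall x, [forall y, (gle y x && (x \in I)) ==> (y \in I)]].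

Definition RQ (R : realType) := {fraction {poly R}}.
Definition qvar (R : realType) : RQ R := tofrac ('X : {poly R}).

Definition qint (R : realType) (m : nat) : RQ R := \sum_(k < m) (qvar R) ^+ k.

Definition Tplus (R : realType) a b (p : grid a b) (I : {set grid a b}) : RQ R :=
  ((p \notin I) && [forall r, glt r p ==> (r \in I)])%:R.

Definition Tminus (R : realType) a b (p : grid a b) (I : {set grid a b}) : RQ R :=
  ((p \in I) && [forall r, glt p r ==> (r \notin I)])%:R.

Definition Tq (R : realType) a b (p : grid a b) (I : {set grid a b}) : RQ R :=
  Tplus R p I - qvar R * Tminus R p I.

Definition qequiv (R : realType) a b (f g : {set grid a b} -> RQ R) : Prop :=
  exists c : grid a b -> RQ R,
    forall I : {set grid a b}, is_ideal I ->
      f I - g I = \sum_(p : grid a b) c p * Tq R p I.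

(* Main.v *)
Require Import Defs.
From HB Require Import structures.
From mathcomp Require Import all_boot all_order all_algebra.
From mathcomp Require Import fraction.
From mathcomp Require Import reals.
From mathcomp Require Import zify ring.
Import Order.TTheory GRing.Theory Num.Theory.
Local Open Scope ring_scope.
Set Implicit Arguments. Unset Strict Implicit. Unset Printing Implicit Defensive.

Definition lamn a b (I : {set grid a b}) (n : nat) : nat :=
  (\max_(z : grid a b | (z.1 == n :> nat) && (z \in I)) (z.2).+1)%N.

Lemma ideal_down a b (I : {set grid a b}) : is_ideal I ->
  forall x y : grid a b, gle y x -> x \in I -> y \in I.
Proof.
move=> /forallP H x y hyx hx; move/forallP: (H x) => /(_ y).
by rewrite hyx hx => /implyP; apply.
Qed.

Lemma memI a b (I : {set grid a b}) (hI : is_ideal I) (p : grid a b) :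
  (p \in I) = (p.2 < lamn I p.1)%N.
Proof.
case hp: (p \in I).
  symmetry; apply: (@leq_bigmax_cond _ (fun z : grid a b => (z.1 == p.1 :> nat) && (z \in I)) (fun z => (z.2).+1)).
  by rewrite eqxx hp.
symmetry; apply/negbTE; rewrite -leqNgt; apply/bigmax_leqP => z /andP[/eqP hz hzI].
rewrite ltnNge; apply/negP => hle.
have : p \in I by apply: (ideal_down hI) hzI; rewrite /gle hz leqnn hle.
by rewrite hp.
Qed.

Lemma lamn_anti a b (I : {set grid a b}) (hI : is_ideal I) (m n : nat) :
  (m <= n)%N -> (lamn I n <= lamn I m)%N.
Proof.
move=> hmn; apply/bigmax_leqP => z /andP[/eqP hz hzI].
have hm : (m < a)%N by rewrite (leq_ltn_trans hmn) // -hz ltn_ord.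
pose z' : grid a b := (Ordinal hm, z.2).
have hz' : z' \in I by apply: (ideal_down hI) hzI; rewrite /gle /= hz hmn leqnn.
have := @leq_bigmax_cond _ (fun z : grid a b => (z.1 == m :> nat) && (z \in I)) (fun z => (z.2).+1) z'.
by rewrite /= eqxx hz' => /(_ isT).
Qed.

Lemma lamn_le a b (I : {set grid a b}) n : (lamn I n <= b)%N.
Proof. by apply/bigmax_leqP => z _; exact: ltn_ord. Qed.

Lemma lamn_out a b (I : {set grid a b}) n : (a <= n)%N -> lamn I n = 0%N.
Proof.
move=> han; apply/eqP; rewrite -leqn0; apply/bigmax_leqP => z /andP[/eqP hz _].
by move: (ltn_ord z.1); rewrite hz ltnNge han.
Qed.

Lemma pair_neq a b (p r : grid a b) : p != r -> (p.1 == r.1 :> nat) -> (p.2 != r.2 :> nat).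
Proof.
case: p => x y; case: r => x' y' /= hne h1; apply/negP => h2; move: hne.
by rewrite xpair_eqE -!val_eqE /= h1 h2.
Qed.

Lemma Tminus_char R a b (I : {set grid a b}) (hI : is_ideal I) (p : grid a b) :
  Tminus R p I = (((p.2).+1 == lamn I p.1) && (lamn I (p.1).+1 <= p.2))%N%:R.
Proof.
rewrite /Tminus; congr (_%:R); rewrite memI //.
have -> : [forall r, glt p r ==> (r \notin I)] =
   ((lamn I p.1 <= (p.2).+1) && (lamn I (p.1).+1 <= p.2))%N.
  apply/forallP/andP => [H|[hL hL'] r].
    split.
      apply/bigmax_leqP => z /andP[/eqP hz hzI]; rewrite ltnS leqNgt; apply/negP => hlt.
      have := H z; rewrite hzI implybF => /negP; apply.
      rewrite /glt /gle hz leqnn /= (ltnW hlt) andbT.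
      by apply/negP => /eqP e; move: hlt; rewrite e ltnn.
    apply/bigmax_leqP => z /andP[/eqP hz hzI]; rewrite ltnNge; apply/negP => hle.
    have := H z; rewrite hzI implybF => /negP; apply.
    rewrite /glt /gle hz leqnSn hle !andbT.
    by apply/negP => /eqP e; move: hz; rewrite -e; lia.
  apply/implyP => /andP[hne /andP[h1 h2]]; rewrite memI // -leqNgt.
  case: (ltngtP p.1 r.1) => [hlt|hgt|heq].
  - apply: leq_trans (lamn_anti hI hlt) (leq_trans hL' h2).
  - by move: hgt; rewrite ltnNge h1.
  - have hne2 := pair_neq hne (introT eqP heq).
    rewrite -heq; apply: leq_trans hL _.
    by rewrite ltn_neqAle hne2 h2.
by rewrite andbA -eqn_leq eq_sym.
Qed.

Lemma Tplus_char R a b (I : {set grid a b}) (hI : is_ideal I) (p : grid a b) :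
  Tplus R p I = ((p.2 == lamn I p.1 :> nat) && ((p.1 == 0 :> nat) || (p.2 < lamn I (p.1).-1)))%N%:R.
Proof.
rewrite /Tplus; congr (_%:R); rewrite memI //.
have -> : [forall r, glt r p ==> (r \in I)] =
   ((p.2 <= lamn I p.1) && ((p.1 == 0 :> nat) || (p.2 < lamn I (p.1).-1)))%N.
  apply/forallP/andP => [H|[hL hL'] r].
    split.
      case e2: (p.2 : nat) => [|k] //.
      have hk : (k < b)%N by apply: ltnW; rewrite -e2.
      pose r : grid a b := (p.1, Ordinal hk).
      move/implyP: (H r); rewrite memI //=; apply.
      rewrite /glt /gle /= leqnn e2 leqnSn !andbT.
      apply/negP => /eqP e; have : (r.2 = p.2 :> nat) by rewrite e.
      rewrite /= e2; lia.
    case e1: (p.1 : nat) => [|m]; first by rewrite eqxx.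
    have hm : (m < a)%N by apply: ltnW; rewrite -e1.
    pose r : grid a b := (Ordinal hm, p.2).
    move/implyP: (H r); rewrite memI //= => h; rewrite h //.
    rewrite /glt /gle /= leqnn e1 leqnSn !andbT.
    apply/negP => /eqP e; have : (r.1 = p.1 :> nat) by rewrite e.
    rewrite /= e1; lia.
  apply/implyP => /andP[hne /andP[h1 h2]]; rewrite memI //.
  case: (ltngtP r.1 p.1) => [hlt|hgt|heq].
  - have hp0 : (p.1 == 0 :> nat) = false by apply/negbTE; rewrite -lt0n (leq_ltn_trans _ hlt).
    move: hL'; rewrite hp0 /= => hL'.
    apply: leq_ltn_trans h2 (leq_trans hL' (lamn_anti hI _)).
    by rewrite -ltnS prednK // (leq_ltn_trans _ hlt).
  - by move: hgt; rewrite ltnNge h1.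
  - have hne2 := pair_neq hne (introT eqP heq).
    rewrite heq; apply: leq_trans _ hL.
    by rewrite ltn_neqAle hne2 h2.
rewrite andbA; congr (_ && _); by rewrite -leqNgt eqn_leq andbC.
Qed.

Definition Drow R a b (I : {set grid a b}) (x : nat) : RQ R :=
  \sum_(p : grid a b | p.1 == x :> nat) Tminus R p I.
Definition Urow R a b (I : {set grid a b}) (x : nat) : RQ R :=
  \sum_(p : grid a b | p.1 == x :> nat) Tplus R p I.

Lemma sum_row_ind R a b (x k : nat) (P : nat -> bool) : (x < a)%N ->
  \sum_(p : grid a b | p.1 == x :> nat) ((p.2 == k :> nat) && P p.2)%:R
    = ((k < b)%N && P k)%:R :> RQ R.
Proof.
move=> hx; case: (ltnP k b) => hk.
  rewrite (bigD1 ((Ordinal hx, Ordinal hk) : grid a b)) /=; last by rewrite eqxx.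
  rewrite eqxx /= big1 ?addr0 // => p /andP[hp1 hne].
  case h2: (p.2 == k :> nat) => //=.
  exfalso; move: hne; case: p hp1 h2 => [x' y'] /= h1 h2.
  by rewrite xpair_eqE -!val_eqE /= h1 h2.
rewrite big1 //= => p _.
case h2: (p.2 == k :> nat) => //=.
by move: (ltn_ord p.2); rewrite (eqP h2) ltnNge hk.
Qed.

Lemma Drow_val R a b (I : {set grid a b}) (hI : is_ideal I) x : (x < a)%N ->
  Drow R I x = ((0 < lamn I x) && (lamn I x.+1 < lamn I x))%N%:R.
Proof.
move=> hx; rewrite /Drow.
rewrite (eq_bigr (fun p : grid a b => ((p.2 == (lamn I x).-1 :> nat) &&
     ((0 < lamn I x) && (lamn I x.+1 <= (lamn I x).-1)))%N%:R)); last first.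
  move=> p /eqP hp; rewrite Tminus_char // hp; congr (_%:R).
  case: (lamn I x) => [|L] /=; first by rewrite andbF.
  by have -> : (p.2.+1 == L.+1) = (p.2 == L :> nat) by []; case: eqP => // ->.
rewrite (@sum_row_ind R a b x (lamn I x).-1 (fun _ => ((0 < lamn I x) && (lamn I x.+1 <= (lamn I x).-1))%N)) //; congr (_%:R).
have := lamn_le I x; case: (lamn I x) => [|L] //= hL.
  by rewrite andbF.
by rewrite hL.
Qed.

Lemma Urow_val R a b (I : {set grid a b}) (hI : is_ideal I) x : (x < a)%N ->
  Urow R I x = ((lamn I x < b) && ((x == 0) || (lamn I x < lamn I x.-1)))%N%:R.
Proof.
move=> hx; rewrite /Urow.
rewrite (eq_bigr (fun p : grid a b => ((p.2 == lamn I x :> nat) &&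
     ((x == 0) || (p.2 < lamn I x.-1)))%N%:R)); last first.
  by move=> p /eqP hp; rewrite Tplus_char // hp.
by rewrite (@sum_row_ind R a b x (lamn I x) (fun y => ((x == 0) || (y < lamn I x.-1))%N)).
Qed.

Lemma F1 R a b (I : {set grid a b}) (hI : is_ideal I) x : (x.+1 < a)%N ->
  Urow R I x.+1 = Drow R I x.
Proof.
move=> hx; rewrite Urow_val // Drow_val ?(ltnW hx) //; congr (_%:R) => /=.
have := lamn_le I x; lia.
Qed.

Lemma F2 R a b (I : {set grid a.+1 b.+1}) (hI : is_ideal I) :
  Urow R I 0 = 1 - ((ord0, ord_max) \in I)%:R.
Proof.
rewrite Urow_val // memI //= andbT.
have h2 := lamn_le I 0; case: (ltnP b (lamn I 0)) => h1.
  have -> : (lamn I 0 < b.+1)%N = false by apply/negbTE; rewrite -leqNgt.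
  by rewrite subrr.
by rewrite ltnS h1 subr0.
Qed.

Lemma F3 R a b (I : {set grid a.+1 b.+1}) (hI : is_ideal I) :
  Drow R I a = ((ord_max, ord0) \in I)%:R.
Proof.
by rewrite Drow_val // memI //= (@lamn_out _ _ I a.+1) // andbb.
Qed.

Definition sw a b (p : grid a b) : grid b a := (p.2, p.1).
Definition tI a b (I : {set grid a b}) : {set grid b a} := [set p | sw p \in I].

Lemma swK a b (p : grid a b) : sw (sw p) = p.
Proof. by case: p. Qed.

Lemma gle_sw a b (x y : grid a b) : gle (sw x) (sw y) = gle x y.
Proof. by rewrite /gle andbC. Qed.

Lemma glt_sw a b (x y : grid a b) : glt (sw x) (sw y) = glt x y.
Proof.
rewrite /glt gle_sw; congr (~~ _ && _).
by case: x => x1 x2; case: y => y1 y2; rewrite /sw /= !xpair_eqE andbC.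
Qed.

Lemma tI_ideal a b (I : {set grid a b}) : is_ideal I -> is_ideal (tI I).
Proof.
move=> hI; apply/forallP => x; apply/forallP => y; apply/implyP => /andP[hyx].
rewrite !inE => hx; apply: (ideal_down hI) hx.
by rewrite -gle_sw !swK.
Qed.

Lemma Tminus_sw R a b (I : {set grid a b}) (p : grid a b) :
  Tminus R (sw p) (tI I) = Tminus R p I.
Proof.
rewrite /Tminus inE swK; congr ((_ && _)%:R).
apply/forallP/forallP => H r.
  by have := H (sw r); rewrite glt_sw inE swK.
by rewrite -[r in glt _ r]swK glt_sw inE; apply: H.
Qed.

Lemma Tplus_sw R a b (I : {set grid a b}) (p : grid a b) :
  Tplus R (sw p) (tI I) = Tplus R p I.
Proof.
rewrite /Tplus inE swK; congr ((_ && _)%:R).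
apply/forallP/forallP => H r.
  by have := H (sw r); rewrite glt_sw inE swK.
by rewrite -[r in glt r _]swK glt_sw inE; apply: H.
Qed.

Definition Dcol R a b (I : {set grid a b}) (y : nat) : RQ R :=
  \sum_(p : grid a b | p.2 == y :> nat) Tminus R p I.
Definition Ucol R a b (I : {set grid a b}) (y : nat) : RQ R :=
  \sum_(p : grid a b | p.2 == y :> nat) Tplus R p I.

Lemma Dcol_sw R a b (I : {set grid a b}) y : Dcol R I y = Drow R (tI I) y.
Proof.
rewrite /Drow (reindex (@sw a b)) /=; last by exists (@sw b a) => p _; case: p.
by apply: eq_bigr => p _; rewrite Tminus_sw.
Qed.

Lemma Ucol_sw R a b (I : {set grid a b}) y : Ucol R I y = Urow R (tI I) y.
Proof.
rewrite /Urow (reindex (@sw a b)) /=; last by exists (@sw b a) => p _; case: p.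
by apply: eq_bigr => p _; rewrite Tplus_sw.
Qed.

Lemma F4 R a b (I : {set grid a b}) (hI : is_ideal I) y : (y.+1 < b)%N ->
  Ucol R I y.+1 = Dcol R I y.
Proof. by move=> hy; rewrite Ucol_sw Dcol_sw F1 // tI_ideal. Qed.

Lemma F5 R a b (I : {set grid a.+1 b.+1}) (hI : is_ideal I) :
  Ucol R I 0 = 1 - ((ord_max, ord0) \in I)%:R.
Proof. by rewrite Ucol_sw F2 ?tI_ideal // inE. Qed.

Lemma F6 R a b (I : {set grid a.+1 b.+1}) (hI : is_ideal I) :
  Dcol R I b = ((ord0, ord_max) \in I)%:R.
Proof. by rewrite Dcol_sw F3 ?tI_ideal // inE. Qed.

Definition Zf R a b (f : {set grid a b} -> RQ R) : Prop :=
  exists c : grid a b -> RQ R,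
    forall I : {set grid a b}, is_ideal I -> f I = \sum_(p : grid a b) c p * Tq R p I.

Lemma Z_add R a b (f g : {set grid a b} -> RQ R) :
  Zf f -> Zf g -> Zf (fun I => f I + g I).
Proof.
move=> [c1 h1] [c2 h2]; exists (fun p => c1 p + c2 p) => I hI.
by rewrite h1 // h2 // -big_split /=; apply: eq_bigr => p _; rewrite mulrDl.
Qed.

Lemma Z_scale R a b k (f : {set grid a b} -> RQ R) :
  Zf f -> Zf (fun I => k * f I).
Proof.
move=> [c h]; exists (fun p => k * c p) => I hI.
by rewrite h // mulr_sumr; apply: eq_bigr => p _; rewrite mulrA.
Qed.

Lemma Z_ext R a b (f g : {set grid a b} -> RQ R) :
  Zf f -> (forall I, is_ideal I -> f I = g I) -> Zf g.
Proof. by move=> [c h] e; exists c => I hI; rewrite -e // h. Qed.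

Lemma Z_0 R a b : Zf (fun _ : {set grid a b} => 0 : RQ R).
Proof. by exists (fun _ => 0) => I _; rewrite big1 // => p _; rewrite mul0r. Qed.

Lemma Z_row R a b x :
  Zf (fun I : {set grid a b} => Urow R I x - qvar R * Drow R I x).
Proof.
exists (fun p : grid a b => (p.1 == x :> nat)%:R : RQ R) => I _.
rewrite /Urow /Drow mulr_sumr -sumrB big_mkcond /=.
by apply: eq_bigr => p _; case: ifP => _; rewrite ?mul1r ?mul0r.
Qed.

Lemma Z_col R a b y :
  Zf (fun I : {set grid a b} => Ucol R I y - qvar R * Dcol R I y).
Proof.
exists (fun p : grid a b => (p.2 == y :> nat)%:R : RQ R) => I _.
rewrite /Ucol /Dcol mulr_sumr -sumrB big_mkcond /=.
by apply: eq_bigr => p _; case: ifP => _; rewrite ?mul1r ?mul0r.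
Qed.

Definition uI R a b (I : {set grid a.+1 b.+1}) : RQ R := ((ord_max, ord0) \in I)%:R.
Definition sI R a b (I : {set grid a.+1 b.+1}) : RQ R := ((ord0, ord_max) \in I)%:R.

Lemma stepD R a b : forall k x, (x + k = a)%N ->
  Zf (fun I : {set grid a.+1 b.+1} => Drow R I x - qvar R ^+ k * uI R I).
Proof.
elim => [|k IH] x hx.
  apply: Z_ext (Z_0 R a.+1 b.+1) _ => I hI.
  by rewrite addn0 in hx; rewrite hx F3 // expr0 mul1r /uI subrr.
have hx' : (x.+1 + k = a)%N by rewrite addSn -addnS.
apply: Z_ext (Z_add (Z_row R a.+1 b.+1 x.+1) (Z_scale (qvar R) (IH _ hx'))) _ => I hI.
rewrite F1 //; last by rewrite ltnS -hx' leq_addr.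
rewrite exprS; ring.
Qed.

Lemma stepC R a b : forall k y, (y + k = b)%N ->
  Zf (fun I : {set grid a.+1 b.+1} => Dcol R I y - qvar R ^+ k * sI R I).
Proof.
elim => [|k IH] y hy.
  apply: Z_ext (Z_0 R a.+1 b.+1) _ => I hI.
  by rewrite addn0 in hy; rewrite hy F6 // expr0 mul1r /sI subrr.
have hy' : (y.+1 + k = b)%N by rewrite addSn -addnS.
apply: Z_ext (Z_add (Z_col R a.+1 b.+1 y.+1) (Z_scale (qvar R) (IH _ hy'))) _ => I hI.
rewrite F4 //; last by rewrite ltnS -hy' leq_addr.
rewrite exprS; ring.
Qed.

Lemma relA R a b :
  Zf (fun I : {set grid a.+1 b.+1} => 1 - sI R I - qvar R ^+ a.+1 * uI R I).
Proof.
apply: Z_ext (Z_add (Z_row R a.+1 b.+1 0) (Z_scale (qvar R) (@stepD R a b a 0 (add0n a)))) _ => I hI.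
rewrite F2 // /sI exprS; ring.
Qed.

Lemma relB R a b :
  Zf (fun I : {set grid a.+1 b.+1} => 1 - uI R I - qvar R ^+ b.+1 * sI R I).
Proof.
apply: Z_ext (Z_add (Z_col R a.+1 b.+1 0) (Z_scale (qvar R) (@stepC R a b b 0 (add0n b)))) _ => I hI.
rewrite F5 // /uI exprS; ring.
Qed.

Lemma qint_mul R m : (1 - qvar R) * qint R m = 1 - qvar R ^+ m.
Proof. by rewrite /qint -opprB -[RHS]opprB subrX1 mulNr. Qed.

Lemma one_sub_q_neq0 R m : (0 < m)%N -> 1 - qvar R ^+ m != 0.
Proof.
move=> hm; rewrite -oppr_eq0 opprB /qvar -tofracXn -tofrac1 -tofracB tofrac_eq0.
by rewrite -polyC1 monic_neq0 // monicXnsubC.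
Qed.

Lemma hu R a b :
  Zf (fun I : {set grid a.+1 b.+1} => uI R I - qint R b.+1 / qint R (a.+1 + b.+1)).
Proof.
have hn := @one_sub_q_neq0 R (a.+1 + b.+1) isT.
have e : qint R b.+1 / qint R (a.+1 + b.+1) =
         (1 - qvar R ^+ b.+1) / (1 - qvar R ^+ a.+1 * qvar R ^+ b.+1).
  have h1 := @one_sub_q_neq0 R 1 isT; rewrite expr1 in h1.
  by rewrite -exprD -!qint_mul -mulf_div divff // mul1r.
rewrite exprD in hn.
apply: Z_ext (Z_scale (- (1 - qvar R ^+ a.+1 * qvar R ^+ b.+1)^-1)
   (Z_add (@relB R a b) (Z_scale (- qvar R ^+ b.+1) (@relA R a b)))) _ => I hI.
rewrite e; move: (qvar R ^+ a.+1) (qvar R ^+ b.+1) (uI R I) (sI R I) hn => A B u s hn'.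
have -> : forall z : RQ R, - (1 - A * B)^-1 * z = - (z / (1 - A * B)) by move=> z; rewrite mulrC mulrN.
rewrite -[u in RHS](mulfK hn') -mulrBl; rewrite -mulNr; congr (_ / _); ring.
Qed.

Lemma hs R a b :
  Zf (fun I : {set grid a.+1 b.+1} => sI R I - qint R a.+1 / qint R (a.+1 + b.+1)).
Proof.
have hn := @one_sub_q_neq0 R (a.+1 + b.+1) isT.
have e : qint R a.+1 / qint R (a.+1 + b.+1) =
         (1 - qvar R ^+ a.+1) / (1 - qvar R ^+ a.+1 * qvar R ^+ b.+1).
  have h1 := @one_sub_q_neq0 R 1 isT; rewrite expr1 in h1.
  by rewrite -exprD -!qint_mul -mulf_div divff // mul1r.
rewrite exprD in hn.
apply: Z_ext (Z_scale (- (1 - qvar R ^+ a.+1 * qvar R ^+ b.+1)^-1)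
   (Z_add (@relA R a b) (Z_scale (- qvar R ^+ a.+1) (@relB R a b)))) _ => I hI.
rewrite e; move: (qvar R ^+ a.+1) (qvar R ^+ b.+1) (uI R I) (sI R I) hn => A B u s hn'.
have -> : forall z : RQ R, - (1 - A * B)^-1 * z = - (z / (1 - A * B)) by move=> z; rewrite mulrC mulrN.
rewrite -[s in RHS](mulfK hn') -mulrBl -mulNr; congr (_ / _); ring.
Qed.

Theorem theorem5p12 (R : realType) (a b : nat) (ha : (1 <= a)%N) (hb : (1 <= b)%N) :
  (forall i : nat, (1 <= i <= a)%N ->
     qequiv (fun I : {set grid a b} =>
               \sum_(p : grid a b | (p.1).+1 == i) Tminus R p I)
            (fun _ => qvar R ^+ (a - i) * qint R b / qint R (a + b)))
  /\
  (forall j : nat, (1 <= j <= b)%N ->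
     qequiv (fun I : {set grid a b} =>
               \sum_(p : grid a b | (p.2).+1 == j) Tminus R p I)
            (fun _ => qvar R ^+ (b - j) * qint R a / qint R (a + b))).
Proof.
case: a ha => // a _; case: b hb => // b _.
split.
  move=> i /andP[hi1 hi2].
  have hk : (i.-1 + (a.+1 - i) = a)%N by lia.
  apply: Z_ext (Z_add (@stepD R a b _ _ hk) (Z_scale (qvar R ^+ (a.+1 - i)) (@hu R a b))) _ => I hI.
  rewrite /Drow (eq_bigl (fun p : grid a.+1 b.+1 => (p.1).+1 == i)); first by ring.
  by move=> p /=; apply/eqP/eqP; lia.
move=> j /andP[hj1 hj2].
have hk : (j.-1 + (b.+1 - j) = b)%N by lia.
apply: Z_ext (Z_add (@stepC R a b _ _ hk) (Z_scale (qvar R ^+ (b.+1 - j)) (@hs R a b))) _ => I hI.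
rewrite /Dcol (eq_bigl (fun p : grid a.+1 b.+1 => (p.2).+1 == j)); first by ring.
by move=> p /=; apply/eqP/eqP; lia.
Qed.
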